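(* Let $\mathcal H$ be a hypergraph and $\mathcal A$ a sub-hypergraph of $\mathcal H$. Suppose that for any $\sigma,\sigma'\in\mathcal H$, either $\sigma\cap\sigma'=\emptyset$ or $\sigma\cap\sigma'\in\mathcal H$; and that for any $\tau\in\mathcal A$ and $\tau'\in\mathcal H-\mathcal A$, either $\tau\cap\tau'=\emptyset$ or $\tau\cap\tau'\in\mathrm{bd}(\mathcal H,\mathcal A)$. Then for each $n\ge 0$, $$H_n(\mathcal H,\mathcal A)\oplus H_n(\mathcal H,\mathcal H-\mathcal A)\cong H_n(\mathcal H,\mathrm{bd}(\mathcal H,\mathcal A)).$$
   Context: A hypergraph is a finite set of nonempty finite subsets of a vertex set (hyperedges); an $n$-hyperedge has $n+1$ vertices. For $\mathcal A\subseteq\mathcal H$: $\mathcal H\setminus\mathcal A=\{\sigma\in\mathcal H:\sigma\notin\mathcal A\}$; the closed complement $\mathcal H-\mathcal A=\{\sigma\in\mathcal H:\sigma\subseteq\tau\text{ for some }\tau\in\mathcal H\setminus\mathcal A\}$; the boundary $\mathrm{bd}(\mathcal H,\mathcal A)=\mathcal A\cap(\mathcal H-\mathcal A)$. The associated simplicial complex is $\Delta\mathcal H=\{\sigma\ne\emptyset:\sigma\subseteq\tau\text{ for some }\tau\in\mathcal H\}$. Fix an abelian coefficient group $G$; chains are simplicial chains of $\Delta\mathcal H$ with coefficients in $G$ and boundary $\partial$; $G(\mathcal X)_n$ is the group of $G$-linear combinations of $n$-hyperedges of $\mathcal X$; $\mathrm{Inf}_n(\mathcal X)=G(\mathcal X)_n\cap\partial_n^{-1}(G(\mathcal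 X)_{n-1})$. Relative embedded homology: $H_n(\mathcal H,\mathcal B)=H_n(\mathrm{Inf}_*(\mathcal H)/\mathrm{Inf}_*(\mathcal B))$ for $\mathcal B\subseteq\mathcal H$. *)

(* Defs.v *)
From HB Require Import structures.
From mathcomp Require Import all_boot all_algebra.
From mathcomp Require Import boolp.
Set Implicit Arguments. Unset Strict Implicit. Unset Printing Implicit Defensive.
Import GRing.Theory.
Local Open Scope ring_scope.
Local Open Scope quotient_scope.

(* A pair of subgroups (Z, B) of an abelian group M; its quotient is Z/(Z ∩ B). *)
Record subgroup_pair (M : zmodType) := SubgroupPair {
  sp_Z : M -> Prop;
  sp_B : M -> Prop;
  sp_Z0 : sp_Z 0;
  sp_ZB : forall x y, sp_Z x -> sp_Z y -> sp_Z (x - y);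
  sp_B0 : sp_B 0;
  sp_BB : forall x y, sp_B x -> sp_B y -> sp_B (x - y) }.

Section QuotGroup.
Variables (M : zmodType) (S : subgroup_pair M).

Definition zcar := {x : M | `[< sp_Z S x >]}.

Definition zrel (a b : zcar) : bool := `[< sp_B S (val a - val b) >].

Lemma zrel_refl : reflexive zrel.
Proof. by move=> a; apply/asboolP; rewrite subrr; exact: sp_B0. Qed.

Lemma BN x : sp_B S x -> sp_B S (- x).
Proof. by move=> h; rewrite -sub0r; apply: sp_BB => //; exact: sp_B0. Qed.

Lemma BD x y : sp_B S x -> sp_B S y -> sp_B S (x + y).
Proof. by move=> hx hy; rewrite -[y]opprK; apply: sp_BB => //; exact: BN. Qed.

Lemma zrel_sym : symmetric zrel.
Proof.
move=> a b; apply/asboolP/asboolP => h; rewrite -opprB; exact: BN.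
Qed.

Lemma zrel_trans : transitive zrel.
Proof.
move=> b a c /asboolP h1 /asboolP h2; apply/asboolP.
have -> : val a - val c = (val a - val b) + (val b - val c) by rewrite addrA subrK.
exact: BD.
Qed.

Canonical zrel_equiv := EquivRel zrel zrel_refl zrel_sym zrel_trans.

Definition quot_group := {eq_quot zrel}.
HB.instance Definition _ := EqQuotient.on quot_group.
HB.instance Definition _ := Choice.on quot_group.

Lemma ZN x : sp_Z S x -> sp_Z S (- x).
Proof. by move=> h; rewrite -sub0r; apply: sp_ZB => //; exact: sp_Z0. Qed.
Lemma ZD x y : sp_Z S x -> sp_Z S y -> sp_Z S (x + y).
Proof. by move=> hx hy; rewrite -[y]opprK; apply: sp_ZB => //; exact: ZN. Qed.

Definition zc0 : zcar := exist _ 0 (asboolT (sp_Z0 S)).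
Definition zcadd (a b : zcar) : zcar :=
  exist _ (val a + val b) (asboolT (ZD (asboolW (valP a)) (asboolW (valP b)))).
Definition zcopp (a : zcar) : zcar :=
  exist _ (- val a) (asboolT (ZN (asboolW (valP a)))).

Definition qzero : quot_group := \pi_quot_group zc0.
Definition qadd (p q : quot_group) : quot_group := \pi_quot_group (zcadd (repr p) (repr q)).
Definition qopp (p : quot_group) : quot_group := \pi_quot_group (zcopp (repr p)).

Lemma repr_pi (a : zcar) : zrel (repr (\pi_quot_group a)) a.
Proof. by apply/eqmodP; rewrite reprK. Qed.

Lemma qaddE a b : qadd (\pi_quot_group a) (\pi_quot_group b) = \pi_quot_group (zcadd a b).
Proof.
apply/eqmodP; apply/asboolP => /=.
move: (repr_pi a) (repr_pi b) => /asboolP ha /asboolP hb.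
set x := repr _ in ha *; set y := repr _ in hb *.
have -> : val x + val y - (val a + val b) = (val x - val a) + (val y - val b).
  by rewrite opprD addrACA.
exact: BD.
Qed.

Lemma qoppE a : qopp (\pi_quot_group a) = \pi_quot_group (zcopp a).
Proof.
apply/eqmodP; apply/asboolP => /=.
move: (repr_pi a) => /asboolP ha; set x := repr _ in ha *.
rewrite -opprD; exact: BN.
Qed.

Lemma zc_eq (a b : zcar) : val a = val b -> \pi_quot_group a = \pi_quot_group b.
Proof. by move=> h; apply/eqmodP; apply/asboolP; rewrite h subrr; exact: sp_B0. Qed.

Lemma qaddA : associative qadd.
Proof.
elim/quotW=> a; elim/quotW=> b; elim/quotW=> c.
rewrite (qaddE b c) (qaddE a b) (qaddE a) qaddE.
by apply: zc_eq; rewrite /= addrA.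
Qed.
Lemma qaddC : commutative qadd.
Proof. by elim/quotW=> a; elim/quotW=> b; rewrite (qaddE a b) (qaddE b a); apply: zc_eq; rewrite /= addrC. Qed.
Lemma qadd0 : left_id qzero qadd.
Proof. by elim/quotW=> a; rewrite qaddE; apply: zc_eq; rewrite /= add0r. Qed.
Lemma qaddN : left_inverse qzero qopp qadd.
Proof. by elim/quotW=> a; rewrite qoppE qaddE; apply: zc_eq; rewrite /= addNr. Qed.

HB.instance Definition _ := GRing.isZmodule.Build quot_group qaddA qaddC qadd0 qaddN.
End QuotGroup.


Local Close Scope quotient_scope.

Section Hyper.
Variable V : finType.
Implicit Types (H X A : {set {set V}}).

Definition hypergraph H : Prop := set0 \notin H.

Definition closed_compl H A : {set {set V}} :=
  [set s in H | [exists t in H :\: A, s \subset t]].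
Definition bd H A : {set {set V}} := A :&: closed_compl H A.
Definition Delta H : {set {set V}} :=
  [set s : {set V} | (s != set0) && [exists t in H, s \subset t]].

Variable G : zmodType.
Definition chain := {ffun {set V} -> G}.

Definition vpos (s : {set V}) (v : V) : nat :=
  #|[set x in s | (enum_rank x < enum_rank v)%N]|.
Definition bsign (s t : {set V}) : nat := (\sum_(v in s :\: t) vpos s v)%N.

Definition bdry H (n : nat) (f : chain) : chain :=
  [ffun t => if t == set0 then 0 else
     \sum_(s in Delta H | (#|s| == n.+1)%N && (t \subset s) && (#|t| == n)%N)
        (if odd (bsign s t) then - f s else f s)].

Definition Gch X (n : nat) (f : chain) : Prop :=
  forall s, f s != 0 -> s \in X /\ #|s| = n.+1.

Definition Inf H X (n : nat) (f : chain) : Prop :=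
  Gch X n f /\ match n with 0 => True | n'.+1 => Gch X n' (bdry H n f) end.

Definition rel_cycle H B (n : nat) (f : chain) : Prop :=
  Inf H H n f /\ match n with 0 => True | n'.+1 => Inf H B n' (bdry H n f) end.

Definition rel_boundary H B (n : nat) (f : chain) : Prop :=
  exists g h, Inf H H n.+1 g /\ Inf H B n h /\ f = bdry H n.+1 g + h.

Lemma bdryD H n f g : bdry H n (f + g) = bdry H n f + bdry H n g.
Proof.
apply/ffunP=> t; rewrite !ffunE; case: ifP => _; first by rewrite addr0.
rewrite -big_split; apply: eq_bigr => s _; rewrite !ffunE.
by case: ifP => _ //; rewrite opprD.
Qed.
Lemma bdryN H n f : bdry H n (- f) = - bdry H n f.
Proof.
apply/ffunP=> t; rewrite !ffunE; case: ifP => _; first by rewrite oppr0.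
rewrite -sumrN; apply: eq_bigr => s _; rewrite !ffunE.
by case: ifP.
Qed.
Lemma bdryB H n f g : bdry H n (f - g) = bdry H n f - bdry H n g.
Proof. by rewrite bdryD bdryN. Qed.
Lemma bdry0 H n : bdry H n 0 = 0.
Proof.
by have := bdryB H n 0 0; rewrite subrr => {1}->; rewrite subrr. Qed.

Lemma Gch0 X n : Gch X n 0.
Proof. by move=> s; rewrite ffunE eqxx. Qed.
Lemma GchB X n f g : Gch X n f -> Gch X n g -> Gch X n (f - g).
Proof.
move=> hf hg s; rewrite !ffunE; case: (eqVneq (f s) 0) => [->|/hf //].
by rewrite sub0r oppr_eq0 => /hg.
Qed.
Lemma GchD X n f g : Gch X n f -> Gch X n g -> Gch X n (f + g).
Proof.
move=> hf hg; rewrite -[g]opprK; apply: GchB => //.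
by rewrite -sub0r; apply: GchB => //; exact: Gch0.
Qed.

Lemma Inf0 H X n : Inf H X n 0.
Proof. by split; [exact: Gch0|case: n => // n; rewrite bdry0; exact: Gch0]. Qed.
Lemma InfB H X n f g : Inf H X n f -> Inf H X n g -> Inf H X n (f - g).
Proof.
case=> h1 h2 [h3 h4]; split; first exact: GchB.
by case: n h1 h3 h2 h4 => // n _ _ h2 h4; rewrite bdryB; exact: GchB.
Qed.
Lemma InfD H X n f g : Inf H X n f -> Inf H X n g -> Inf H X n (f + g).
Proof.
move=> hf hg; rewrite -[g]opprK; apply: InfB => //.
by rewrite -sub0r; apply: InfB => //; exact: Inf0.
Qed.

Lemma rel_cycle0 H B n : rel_cycle H B n 0.
Proof. by split; [exact: Inf0|case: n => // n; rewrite bdry0; exact: Inf0]. Qed.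
Lemma rel_cycleB H B n f g :
  rel_cycle H B n f -> rel_cycle H B n g -> rel_cycle H B n (f - g).
Proof.
case=> h1 h2 [h3 h4]; split; first exact: InfB.
by case: n h1 h3 h2 h4 => // n _ _ h2 h4; rewrite bdryB; exact: InfB.
Qed.
Lemma rel_boundary0 H B n : rel_boundary H B n 0.
Proof. by exists 0, 0; split; [exact: Inf0|split; [exact: Inf0|rewrite bdry0 addr0]]. Qed.
Lemma rel_boundaryB H B n f g :
  rel_boundary H B n f -> rel_boundary H B n g -> rel_boundary H B n (f - g).
Proof.
case=> [g1 [h1 [Hg1 [Hh1 ->]]]] [g2 [h2 [Hg2 [Hh2 ->]]]].
exists (g1 - g2), (h1 - h2); split; first exact: InfB.
split; first exact: InfB.
by rewrite bdryB opprD addrACA.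
Qed.

Definition rel_pair H B (n : nat) : subgroup_pair chain :=
  SubgroupPair (rel_cycle0 H B n) (@rel_cycleB H B n)
               (rel_boundary0 H B n) (@rel_boundaryB H B n).

Definition rel_homology H B (n : nat) : zmodType := quot_group (rel_pair H B n).
End Hyper.

(* Main.v *)
Require Import Defs.
From HB Require Import structures.
From mathcomp Require Import all_boot all_algebra.
From mathcomp Require Import boolp.
Set Implicit Arguments. Unset Strict Implicit. Unset Printing Implicit Defensive.
Import GRing.Theory.
Local Open Scope ring_scope.
Local Open Scope quotient_scope.

Lemma qpi_add (M : zmodType) (S : subgroup_pair M) (a b : zcar S) :
  \pi_(quot_group S) a + \pi_(quot_group S) b = \pi_(quot_group S) (zcadd a b).
Proof. exact: qaddE. Qed.

Section QMap.
Variables (M : zmodType) (S1 S2 : subgroup_pair M) (F : M -> M).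
Hypothesis FB : forall x y, F (x - y) = F x - F y.
Hypothesis FZ : forall x, sp_Z S1 x -> sp_Z S2 (F x).
Hypothesis FBd : forall x, sp_Z S1 x -> sp_B S1 x -> sp_B S2 (F x).

Definition zlift (a : zcar S1) : zcar S2 :=
  exist _ (F (val a)) (asboolT (FZ (asboolW (valP a)))).
Definition qmap (q : quot_group S1) : quot_group S2 :=
  \pi_(quot_group S2) (zlift (repr q)).

Lemma qmapE a : qmap (\pi_(quot_group S1) a) = \pi_(quot_group S2) (zlift a).
Proof.
rewrite /qmap; apply/eqmodP; apply/asboolP => /=.
move: (repr_pi a) => /asboolP h; rewrite -FB; apply: FBd => //.
apply: sp_ZB; [exact: (asboolW (valP (repr (\pi_(quot_group S1) a)))) | exact: (asboolW (valP a))].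
Qed.

Lemma F0 : F 0 = 0.
Proof. have h := FB 0 0; rewrite subr0 in h; by rewrite {1}h subrr. Qed.
Lemma FD x y : F (x + y) = F x + F y.
Proof.
have FN : forall z, F (- z) = - F z by move=> z; rewrite -sub0r FB F0 sub0r.
by have := FB x (- y); rewrite opprK FN opprK => ->.
Qed.

Lemma qmapD p q : qmap (p + q) = qmap p + qmap q.
Proof.
elim/quotW: p => a; elim/quotW: q => b.
rewrite qpi_add !qmapE qpi_add.
by apply: zc_eq; rewrite /= FD.
Qed.
End QMap.

Lemma qpi_eq (M : zmodType) (S : subgroup_pair M) (a b : zcar S) :
  sp_B S (val a - val b) -> \pi_(quot_group S) a = \pi_(quot_group S) b.
Proof. by move=> h; apply/eqmodP; apply/asboolP. Qed.


Local Close Scope quotient_scope.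

Section Bd.
Variables (V : finType) (G : zmodType).

Definition sg (k : nat) (x : G) := if odd k then - x else x.
Lemma sgS k x : sg k.+1 x = - sg k x.
Proof. by rewrite /sg /=; case: odd => //; rewrite opprK. Qed.
Lemma sgD i j x : sg i (sg j x) = sg (i + j) x.
Proof. by rewrite /sg oddD; case: (odd i); case: (odd j); rewrite /= ?opprK. Qed.
Lemma sg0x k : sg k 0 = 0.
Proof. by rewrite /sg; case: odd; rewrite ?oppr0. Qed.
Lemma sg_sum (I : finType) (P : pred I) (F : I -> G) k :
  sg k (\sum_(i | P i) F i) = \sum_(i | P i) sg k (F i).
Proof. by rewrite /sg; case: odd => //; rewrite sumrN. Qed.

Lemma sum_nz (I : finType) (P : pred I) (F : I -> G) :
  \sum_(i | P i) F i != 0 -> exists i, P i /\ F i != 0.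
Proof.
move=> h; case: (boolP [exists i, P i && (F i != 0)]).
  by case/existsP=> i /andP[]; exists i.
move/existsPn=> hn; rewrite big1 ?eqxx // in h => i Pi.
by move: (hn i); rewrite Pi /= negbK => /eqP.
Qed.

Variable H : {set {set V}}.

Lemma bdryE n (f : chain V G) t : bdry H n f t =
  if (t != set0) && (#|t| == n)%N then
    \sum_(s in Delta H | (#|s| == n.+1)%N && (t \subset s)) sg (bsign s t) (f s)
  else 0.
Proof.
rewrite ffunE; case: eqP => //= _; case: (eqVneq #|t| n) => hn.
  by apply: eq_bigl => s; rewrite andbT.
by rewrite big_pred0 // => s; rewrite !andbF.
Qed.

Lemma bdry_nz n (f : chain V G) t : bdry H n f t != 0 ->
  [/\ t != set0, #|t| = n &
     exists s, [/\ s \in Delta H, #|s| = n.+1, t \subset s & f s != 0]].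
Proof.
rewrite bdryE; case: ifP => [/andP[t0 /eqP tn]|]; last by rewrite eqxx.
case/sum_nz => s [/andP[sD /andP[/eqP sn ts]] fs].
split => //; exists s; split => //.
by apply: contra fs => /eqP ->; rewrite sg0x.
Qed.

Lemma bsign1 (s t : {set V}) (v : V) : s :\: t = [set v] -> bsign s t = vpos s v.
Proof. by move=> h; rewrite /bsign h big_set1. Qed.

Lemma vposD1lt (s : {set V}) (a b : V) : (enum_rank a < enum_rank b)%N -> vpos (s :\ b) a = vpos s a.
Proof.
move=> ab; rewrite /vpos; apply: eq_card => x; rewrite !inE.
case: (eqVneq x b) => [->|] //=; by rewrite ltnNge (ltnW ab) andbF.
Qed.

Lemma vposD1gt (s : {set V}) (a b : V) : a \in s -> (enum_rank a < enum_rank b)%N ->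
  vpos s b = (vpos (s :\ a) b).+1.
Proof.
move=> as_ ab; rewrite /vpos (cardsD1 a) inE as_ ab /= add1n; congr S.
by apply: eq_card => x; rewrite !inE; case: (eqVneq x a).
Qed.

Lemma key_pred (r s t : {set V}) (a b : V) : r \subset s -> s :\: r = [set a; b] -> a != b ->
  [&& t \subset s, r \subset t & #|t| == #|s|.-1]%N = (t == s :\ b) || (t == s :\ a).
Proof.
move=> rs hsr ab.
have : b \in s :\: r by rewrite hsr !inE eqxx orbT.
have : a \in s :\: r by rewrite hsr !inE eqxx.
rewrite !inE => /andP[anr as_] /andP[bnr bs].
have cD x : x \in s -> #|s :\ x| = #|s|.-1 by move=> xs; rewrite (cardsD1 x s) xs.
apply/idP/idP.
  case/and3P=> ts rt /eqP tc.
  have : ~~ (s \subset t).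
    apply/negP=> st; have := subset_leq_card st; rewrite tc.
    have s0 : (0 < #|s|)%N by apply/card_gt0P; exists a.
    by case: #|s| s0 => // k _; rewrite ltnn.
  case/subsetPn=> x xs xnt.
  have xnr : x \notin r by apply: contra xnt; apply: (subsetP rt).
  have : x \in s :\: r by rewrite inE xnr xs.
  rewrite hsr !inE => /orP[] /eqP xe; subst x.
    apply/orP; right; rewrite eqEcard subsetD1 ts xnt /= (cD a as_) tc leqnn.
    by [].
  apply/orP; left; rewrite eqEcard subsetD1 ts xnt /= (cD b bs) tc leqnn.
  by [].
case/orP=> /eqP ->.
  by rewrite subD1set subsetD1 rs bnr (cD b bs) eqxx.
by rewrite subD1set subsetD1 rs anr (cD a as_) eqxx.
Qed.

Lemma DeltaS (s t : {set V}) : s \in Delta H -> t \subset s -> t != set0 -> t \in Delta H.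
Proof.
rewrite !inE => /andP[_ /existsP[u /andP[uH su]]] ts ->; apply/existsP; exists u.
by rewrite uH (subset_trans ts su).
Qed.

Lemma DD1 (r s : {set V}) (a b : V) : s :\: r = [set a; b] -> a != b ->
  (s :\ b) :\: r = [set a].
Proof.
move=> hsr ab; apply/setP=> x; move/setP: hsr => /(_ x); rewrite !inE => hx.
case: (eqVneq x b) => [->|xb] /=; first by rewrite andbF eq_sym (negbTE ab).
by rewrite hx (negbTE xb) orbF.
Qed.

Lemma DD2 (s : {set V}) (b : V) : b \in s -> s :\: (s :\ b) = [set b].
Proof.
move=> bs; apply/setP=> x; rewrite !inE.
by case: (eqVneq x b) => [->|] /=; rewrite ?bs //= ?andNb.
Qed.

Lemma sg_pair (x : G) i j k l : (i + j = (k + l).+1)%N -> sg (i + j) x + sg (k + l) x = 0.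
Proof. by move=> ->; rewrite sgS addNr. Qed.
Lemma arith (i j k l a b : nat) : i = a -> j = b.+1 -> k = b -> l = a -> (i + j = (k + l).+1)%N.
Proof. by move=> -> -> -> ->; rewrite addnS addnC. Qed.

Lemma bdry_bdry n (f : chain V G) : bdry H n (bdry H n.+1 f) = 0.
Proof.
apply/ffunP=> r; rewrite bdryE ffunE.
case: n => [|m].
  case: ifP => // /andP[r0 /eqP rc]; by move: r0; rewrite -cards_eq0 rc.
case: ifP => // /andP[r0 /eqP rc].
rewrite (eq_bigr (fun t : {set V} => \sum_(s in Delta H | (#|s| == m.+3)%N && (t \subset s))
    sg (bsign t r + bsign s t) (f s))); last first.
  move=> t /andP[tD /andP[/eqP tc _]].
  have t0 : t != set0 by move: tD; rewrite inE => /andP[].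
  by rewrite bdryE t0 tc eqxx /= sg_sum; apply: eq_bigr => s _; rewrite sgD.
rewrite (exchange_big_dep (fun s : {set V} => (s \in Delta H) && (#|s| == m.+3)%N && (r \subset s))) /=; last first.
  move=> t s /andP[_ /andP[_ rt]] /andP[sD /andP[sc ts]].
  by rewrite sD sc (subset_trans rt ts).
rewrite big1 // => s /andP[/andP[sD /eqP sc] rs].
have hc : #|s :\: r| = 2.
  rewrite cardsD (setIidPr rs) sc rc subSS.
  by elim: m {sc rc} => // k; rewrite subSS.
have main : forall a b, a != b -> (enum_rank a < enum_rank b)%N -> s :\: r = [set a; b] ->
  \sum_(t | (t \in Delta H) && ((#|t| == m.+2)%N && (r \subset t)) &&
       ((s \in Delta H) && ((#|s| == m.+3)%N && (t \subset s))))
      sg (bsign t r + bsign s t) (f s) = 0.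
  move=> a b ab lab hsr.
  have /setDP[bs bnr] : b \in s :\: r by rewrite hsr !inE eqxx orbT.
  have /setDP[as_ anr] : a \in s :\: r by rewrite hsr !inE eqxx.
  rewrite (eq_bigl (fun t : {set V} => (t == s :\ b) || (t == s :\ a))); last first.
    move=> t; rewrite -(key_pred t rs hsr ab) sD sc eqxx /=.
    apply/idP/idP => [/andP[/andP[_ /andP[-> ->]] ->] // | /and3P[ts rt ->]].
    rewrite rt ts !andbT; apply: (DeltaS sD ts).
    by apply: contra r0 => /eqP t0; rewrite -subset0 -t0.
  have neq : s :\ a != s :\ b.
    apply/negP=> /eqP /setP /(_ a); rewrite !inE eqxx /= ab as_.
    by [].
  rewrite (bigD1 (s :\ b)) ?eqxx //= (big_pred1 (s :\ a)); last first.
    move=> t /=; case: (eqVneq t (s :\ b)) => [->|] /=; last by rewrite andbT.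
    by rewrite eq_sym (negbTE neq).
  have hsr' : s :\: r = [set b; a] by rewrite hsr setUC.
  have ba : b != a by rewrite eq_sym.
  apply: sg_pair; apply: (@arith _ _ _ _ (vpos s a) (vpos (s :\ a) b)).
  - rewrite (@bsign1 (s :\ b) r a (DD1 hsr ab)); exact: (vposD1lt s lab).
  - rewrite (@bsign1 s (s :\ b) b (DD2 bs)); exact: (vposD1gt as_ lab).
  - exact: (@bsign1 (s :\ a) r b (DD1 hsr' ba)).
  - exact: (@bsign1 s (s :\ a) a (DD2 as_)).
move/eqP: hc; case/cards2P => x [y [xy hsr]].
case: (ltngtP (enum_rank x) (enum_rank y)) => h.
- exact: main x y xy h hsr.
- apply: (main y x) => //; [by rewrite eq_sym | by rewrite hsr setUC].
- by move/ord_inj/enum_rank_inj: h => e; rewrite e eqxx in xy.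
Qed.
End Bd.

Section Gen.
Variables (V : finType) (G : zmodType) (H : {set {set V}}).

Lemma GchS (X Y : {set {set V}}) n (f : chain V G) : X \subset Y -> Gch X n f -> Gch Y n f.
Proof. by move=> XY hf s /hf [sX ->]; split => //; apply: (subsetP XY). Qed.
Lemma GchI (X Y : {set {set V}}) n (f : chain V G) : Gch X n f -> Gch Y n f -> Gch (X :&: Y) n f.
Proof. by move=> hX hY s fs; case: (hX s fs) => sX ->; case: (hY s fs) => sY _; rewrite inE sX sY. Qed.
Lemma InfS (X Y : {set {set V}}) n (f : chain V G) : X \subset Y -> Inf H X n f -> Inf H Y n f.
Proof.
move=> XY [h1 h2]; split; first exact: GchS h1.
by case: n h1 h2 => // n _; apply: GchS.
Qed.
Lemma InfI (X Y : {set {set V}}) n (f : chain V G) : Inf H X n f -> Inf H Y n f -> Inf H (X :&: Y) n f.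
Proof.
move=> [h1 h2] [h3 h4]; split; first exact: GchI.
by case: n h1 h2 h3 h4 => // n _ h2 _ h4; apply: GchI.
Qed.
Lemma Inf_bdry (X : {set {set V}}) n (f : chain V G) : Inf H X n.+1 f -> Inf H X n (bdry H n.+1 f).
Proof.
case=> _ h; split => //; case: n h => // n _; rewrite bdry_bdry; exact: Gch0.
Qed.

Definition restr (X : {set {set V}}) (x : chain V G) : chain V G :=
  [ffun s => if s \in X then x s else 0].
Lemma restrB X x y : restr X (x - y) = restr X x - restr X y.
Proof. by apply/ffunP=> s; rewrite !ffunE; case: ifP; rewrite ?subr0. Qed.
End Gen.

Lemma zid (M : zmodType) (D h a b : M) : D + h - a + (b - D) = h - a + b.
Proof. by rewrite addrC -[D + h - a]addrA addrA subrK addrC. Qed.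

Section Main.
Variables (V : finType) (G : zmodType) (H A : {set {set V}}).
Hypothesis hH : hypergraph H.
Hypothesis hA : A \subset H.
Hypothesis h2 : forall t t', t \in A -> t' \in closed_compl H A ->
          t :&: t' = set0 \/ t :&: t' \in bd H A.

Local Notation K := (closed_compl H A).

Lemma KH : K \subset H.
Proof. by apply/subsetP=> s; rewrite inE => /andP[]. Qed.
Lemma bdA : bd H A \subset A.
Proof. exact: subsetIl. Qed.
Lemma bdK : bd H A \subset K.
Proof. exact: subsetIr. Qed.
Lemma inK (s : {set V}) : s \in H -> s \notin A -> s \in K.
Proof. by move=> sH sA; rewrite inE sH; apply/existsP; exists s; rewrite !inE sA sH subxx. Qed.
Lemma Kw (u : {set V}) : u \in K -> exists w, [/\ w \in H, w \notin A & u \subset w].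
Proof. by rewrite inE => /andP[_ /existsP[w /andP[]]]; rewrite !inE => /andP[wA wH] uw; exists w. Qed.
Lemma KS (u t : {set V}) : u \in K -> t \subset u -> t \in H -> t \in K.
Proof.
move=> /Kw[w [wH wA uw]] tu tH; rewrite inE tH; apply/existsP; exists w.
by rewrite !inE wA wH (subset_trans tu uw).
Qed.

Definition FA (x : chain V G) : chain V G := restr (A :\: K) x.
Definition FQ (x : chain V G) : chain V G := x - FA x.

Lemma FAB x y : FA (x - y) = FA x - FA y.
Proof. exact: restrB. Qed.
Lemma FQE x : FQ x = restr (~: (A :\: K)) x.
Proof. by apply/ffunP=> s; rewrite !ffunE [in RHS]inE; case: (s \in A :\: K); rewrite /= ?subrr ?subr0. Qed.
Lemma FQB x y : FQ (x - y) = FQ x - FQ y.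
Proof. by rewrite !FQE restrB. Qed.
Lemma FAQ x : FA x = x - FQ x.
Proof. by rewrite /FQ opprB addrC subrK. Qed.

Lemma GA n x : Gch H n x -> Gch A n (FA x).
Proof.
move=> hx s; rewrite ffunE; case: ifP; last by rewrite eqxx.
by rewrite inE => /andP[_ sA] /hx [_ ->].
Qed.
Lemma GK n x : Gch H n x -> Gch K n (FQ x).
Proof.
move=> hx s; rewrite !ffunE; case: ifP => sAK; first by rewrite subrr eqxx.
rewrite subr0 => /hx [sH ->]; split => //.
case: (boolP (s \in A)) => sA; last exact: inK.
by move: sAK; rewrite inE sA andbT => /negbFE.
Qed.

Lemma card_eq_sub (t X s : {set V}) m : t \subset X -> X \subset s -> X != s ->
  #|s| = m.+2 -> #|t| = m.+1 -> X = t.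
Proof.
move=> tX Xs Xns sc tc; apply/eqP; rewrite eq_sym eqEcard tX tc /=.
have : X \proper s by rewrite properEneq Xns Xs.
by move/proper_card; rewrite sc.
Qed.

Lemma bdA_key m x : Gch H m.+1 x -> Gch H m (bdry H m.+1 x) -> Gch A m (bdry H m.+1 (FA x)).
Proof.
move=> hx hdx t nz; case/bdry_nz: (nz) => t0 tc [s [sD sc ts]].
rewrite ffunE; case: ifP => [sAK _|]; last by rewrite eqxx.
move: (sAK); rewrite inE => /andP[sK sA].
split => //.
case: (boolP (t \in H)) => tH.
  case: (boolP (t \in A)) => // tA.
  have := h2 sA (inK tH tA); rewrite (setIidPr ts) => -[e|]; first by rewrite e eqxx in t0.
  by move/(subsetP bdA); rewrite (negbTE tA).
have dx0 : bdry H m.+1 x t = 0.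
  by apply/eqP; apply: contraNT tH => /hdx [].
have : bdry H m.+1 (FQ x) t != 0.
  by rewrite /FQ bdryB {1}ffunE dx0 add0r {1}ffunE oppr_eq0.
case/bdry_nz => _ _ [u [_ _ tu /(GK hx) [uK _]]].
case/Kw: uK => w [wH wA uw].
have wK : w \in K by apply: inK.
have sH : s \in H by apply: (subsetP hA).
case: (h2 sA wK) => [e|].
  have : t \subset s :&: w by rewrite subsetI ts (subset_trans tu uw).
  by rewrite e subset0 => /eqP te; rewrite te eqxx in t0.
move=> swbd.
have e : s :&: w = t.
  apply: (card_eq_sub (s := s) (m := m)) => //.
  - by rewrite subsetI ts (subset_trans tu uw).
  - exact: subsetIl.
  - apply/negP=> /eqP e; move/negP: sK; apply.
    by apply: (KS wK); [rewrite -e subsetIr | ].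
by move: tH; rewrite -e (subsetP (subset_trans bdA hA)).
Qed.

Lemma bdK_key m x : Gch H m.+1 x -> Gch H m (bdry H m.+1 x) -> Gch K m (bdry H m.+1 (FQ x)).
Proof.
move=> hx hdx t nz; case/bdry_nz: (nz) => t0 tc [u [_ _ tu /(GK hx) [uK _]]].
split => //; apply: (KS uK tu).
case: (eqVneq (bdry H m.+1 x t) 0) => [dx0|/hdx [] //].
have : bdry H m.+1 (FA x) t != 0.
  by move: nz; rewrite /FQ bdryB {1}ffunE dx0 add0r {1}ffunE oppr_eq0.
by move/(bdA_key hx hdx) => [tA _]; apply: (subsetP hA).
Qed.

Lemma KEY n x : Inf H H n x -> Inf H A n (FA x) /\ Inf H K n (FQ x).
Proof.
case: n => [|m] [hx hdx].
  by split; split => //; [apply: GA | apply: GK].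
by split; split; [apply: GA | apply: bdA_key | apply: GK | apply: bdK_key].
Qed.

Lemma FZ1 n x : rel_cycle H A n x -> rel_cycle H (bd H A) n (FQ x).
Proof.
case=> hx hdx; have [kA kK] := KEY hx; split; first exact: InfS KH kK.
case: n x hx hdx kA kK => // m x hx hdx kA kK.
apply: InfI; last exact: Inf_bdry.
by rewrite /FQ bdryB; apply: InfB => //; exact: Inf_bdry.
Qed.

Lemma FZ2 n x : rel_cycle H K n x -> rel_cycle H (bd H A) n (FA x).
Proof.
case=> hx hdx; have [kA kK] := KEY hx; split; first exact: InfS hA kA.
case: n x hx hdx kA kK => // m x hx hdx kA kK.
apply: InfI; first exact: Inf_bdry.
by rewrite FAQ bdryB; apply: InfB => //; exact: Inf_bdry.
Qed.

Lemma FBd1 n x : rel_cycle H A n x -> rel_boundary H A n x -> rel_boundary H (bd H A) n (FQ x).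
Proof.
case=> hx _ [g [h [hg [hh ex]]]].
have [xA xK] := KEY hx; have [gA gK] := KEY hg.
exists (FQ g), (FQ x - bdry H n.+1 (FQ g)); split; first exact: InfS KH gK.
split; last by rewrite addrC subrK.
apply: InfI; last by apply: InfB => //; exact: Inf_bdry.
have -> : FQ x - bdry H n.+1 (FQ g) = h - FA x + bdry H n.+1 (FA g).
  by rewrite /FQ bdryB opprB {1}ex zid.
by apply: InfD; [apply: InfB | exact: Inf_bdry].
Qed.

Lemma FBd2 n x : rel_cycle H K n x -> rel_boundary H K n x -> rel_boundary H (bd H A) n (FA x).
Proof.
case=> hx _ [g [h [hg [hh ex]]]].
have [xA xK] := KEY hx; have [gA gK] := KEY hg.
exists (FA g), (FA x - bdry H n.+1 (FA g)); split; first exact: InfS hA gA.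
split; last by rewrite addrC subrK.
apply: InfI; first by apply: InfB => //; exact: Inf_bdry.
have -> : FA x - bdry H n.+1 (FA g) = h - FQ x + bdry H n.+1 (FQ g).
  by rewrite !FAQ bdryB (opprB (bdry H n.+1 g)) {1}ex zid.
by apply: InfD; [apply: InfB | exact: Inf_bdry].
Qed.
End Main.

Lemma zid3 (M : zmodType) (a p q : M) : a - p + q - a = q - p.
Proof. by rewrite addrC addrA addKr addrC. Qed.
Lemma zid4 (M : zmodType) (p b q : M) : p + (b - q) - b = p - q.
Proof. by rewrite addrC addrCA addKr. Qed.

Lemma rel_cycle_mono (V : finType) (G : zmodType) (H X Y : {set {set V}}) n (x : chain V G) :
  X \subset Y -> rel_cycle H X n x -> rel_cycle H Y n x.
Proof. by move=> XY [h1 h2]; split => //; case: n x h1 h2 => // n x _; apply: InfS. Qed.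
Lemma rel_boundary_mono (V : finType) (G : zmodType) (H X Y : {set {set V}}) n (x : chain V G) :
  X \subset Y -> rel_boundary H X n x -> rel_boundary H Y n x.
Proof. by move=> XY [g [h [hg [hh ->]]]]; exists g, h; split => //; split => //; apply: InfS hh. Qed.

Theorem mainTheorem13 (V : finType) (G : zmodType) (H A : {set {set V}})
  (hH : hypergraph H) (hA : A \subset H)
  (h1 : forall s s', s \in H -> s' \in H -> s :&: s' = set0 \/ s :&: s' \in H)
  (h2 : forall t t', t \in A -> t' \in closed_compl H A ->
          t :&: t' = set0 \/ t :&: t' \in bd H A)
  (n : nat) :
  exists f : (rel_homology G H A n * rel_homology G H (closed_compl H A) n)%type ->
             rel_homology G H (bd H A) n,
    (forall x y, f (x + y) = f x + f y) /\ bijective f.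
Proof.
pose K := closed_compl H A.
have Z1 : forall x, sp_Z (rel_pair G H A n) x -> sp_Z (rel_pair G H (bd H A) n) (FQ H A x).
  by move=> x hx; exact (FZ1 hA h2 hx).
have Bd1 : forall x, sp_Z (rel_pair G H A n) x -> sp_B (rel_pair G H A n) x ->
    sp_B (rel_pair G H (bd H A) n) (FQ H A x).
  by move=> x hx hb; exact (FBd1 hA h2 hx hb).
have Z2 : forall x, sp_Z (rel_pair G H K n) x -> sp_Z (rel_pair G H (bd H A) n) (FA H A x).
  by move=> x hx; exact (FZ2 hA h2 hx).
have Bd2 : forall x, sp_Z (rel_pair G H K n) x -> sp_B (rel_pair G H K n) x ->
    sp_B (rel_pair G H (bd H A) n) (FA H A x).
  by move=> x hx hb; exact (FBd2 hA h2 hx hb).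
have ZI1 : forall x, sp_Z (rel_pair G H (bd H A) n) x -> sp_Z (rel_pair G H A n) (id x).
  by move=> x; apply: rel_cycle_mono; exact: bdA.
have BI1 : forall x, sp_Z (rel_pair G H (bd H A) n) x -> sp_B (rel_pair G H (bd H A) n) x ->
    sp_B (rel_pair G H A n) (id x).
  by move=> x _; apply: rel_boundary_mono; exact: bdA.
have ZI2 : forall x, sp_Z (rel_pair G H (bd H A) n) x -> sp_Z (rel_pair G H K n) (id x).
  by move=> x; apply: rel_cycle_mono; exact: bdK.
have BI2 : forall x, sp_Z (rel_pair G H (bd H A) n) x -> sp_B (rel_pair G H (bd H A) n) x ->
    sp_B (rel_pair G H K n) (id x).
  by move=> x _; apply: rel_boundary_mono; exact: bdK.
have FBQ := @FQB V G H A.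
have FBA := @FAB V G H A.
have FBI : forall x y : chain V G, id (x - y) = id x - id y by [].
exists (fun p => qmap Z1 p.1 + qmap Z2 p.2); split.
  move=> [p1 p2] [q1 q2] /=.
  by rewrite (qmapD FBQ Z1 Bd1) (qmapD FBA Z2 Bd2) addrACA.
exists (fun z => (qmap ZI1 z, qmap ZI2 z)).
- move=> [p1 p2] /=; elim/quotW: p1 => a; elim/quotW: p2 => b.
  rewrite (qmapE FBQ Z1 Bd1) (qmapE FBA Z2 Bd2) qpi_add.
  rewrite (qmapE FBI ZI1 BI1) (qmapE FBI ZI2 BI2).
  have ha : Inf H H n (val a) by case: (asboolW (valP a)).
  have hb : Inf H H n (val b) by case: (asboolW (valP b)).
  congr pair; apply: qpi_eq => /=.
    exists 0, (FQ H A (val a) + FA H A (val b) - val a); split; first exact: Inf0.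
    split; last by rewrite bdry0 add0r.
    rewrite {1}/FQ zid3 -FBA.
    exact: (KEY hA h2 (InfB hb ha)).1.
  exists 0, (FQ H A (val a) + FA H A (val b) - val b); split; first exact: Inf0.
  split; last by rewrite bdry0 add0r.
  rewrite FAQ zid4 -FBQ.
  exact: (KEY hA h2 (InfB ha hb)).2.
- elim/quotW=> c /=.
  rewrite (qmapE FBI ZI1 BI1) (qmapE FBI ZI2 BI2).
  rewrite (qmapE FBQ Z1 Bd1) (qmapE FBA Z2 Bd2) qpi_add.
  by apply: zc_eq => /=; rewrite /FQ subrK.
Qed.
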